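(* Let $m$ and $n$ be powers of $2$ with $m \ge 16$, $n \ge 4$ and $m \le 4n$, and let $$G = G(m,n) := \langle a, b \mid a^m = 1,\ b^n = 1,\ [b,a] = a^4 \rangle.$$ Let $N = \langle a^4 \rangle$. Then: - $N$ is a characteristic subgroup of $G$; - $G/N$ is abelian; - there is no automorphism $\alpha$ of $G$ whose induced automorphism on $G/N$ is the inversion map $gN \mapsto g^{-1}N$.
   Context: Commutators are $[x,y] = x^{-1}y^{-1}xy$. *)

(* Defs.v *)
From mathcomp Require Import all_boot all_fingroup.
Set Implicit Arguments.
Unset Strict Implicit.
Unset Printing Implicit Defensive.

(* Main.v *)
Require Import Defs.
From mathcomp Require Import all_boot all_fingroup.
From mathcomp Require Import all_algebra all_solvable.
From mathcomp Require Import ring.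
Set Implicit Arguments.
Unset Strict Implicit.
Unset Printing Implicit Defensive.
Import GRing.Theory.
Local Open Scope group_scope.

Section Model.
Variable n : nat.
Let T := ('Z_16 * 'Z_n)%type.

Definition fx (p : T) : T := (p.1 + 1, p.2)%R.
Definition fy (p : T) : T := (13 * p.1, p.2 + 1)%R.

Lemma Z16_5_13 : (5 * 13 = 1 :> 'Z_16)%R. Proof. by apply/val_inj. Qed.
Lemma Z16_16 : (16%:R = 0 :> 'Z_16)%R. Proof. by apply/val_inj. Qed.

Lemma fx_inj : injective fx.
Proof.
move=> [i j] [i' j'] e; have /= h := congr1 fst e; have /= -> := congr1 snd e.
by rewrite (addIr _ h).
Qed.
Lemma fy_inj : injective fy.
Proof.
move=> [i j] [i' j'] e; have /= h := congr1 fst e; have /= h2 := congr1 snd e.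
rewrite (addIr _ h2); congr (_, _).
by rewrite -[i]mul1r -[i']mul1r -Z16_5_13 -!mulrA h.
Qed.

Definition px : {perm T} := perm fx_inj.
Definition py : {perm T} := perm fy_inj.

Lemma pxX k p : (px ^+ k) p = (p.1 + k%:R, p.2)%R.
Proof.
elim: k p => [|k IH] [i j]; first by rewrite expg0 perm1 addr0.
by rewrite expgSr permM IH permE /fx /= -addrA -natr1.
Qed.

Lemma pyX k p : (py ^+ k) p = (13 ^+ k * p.1, p.2 + k%:R)%R.
Proof.
elim: k p => [|k IH] [i j]; first by rewrite expg0 perm1 addr0 expr0 mul1r.
by rewrite expgSr permM IH permE /fy /= -addrA natr1 exprS mulrA.
Qed.

Lemma pyV p : (py^-1) p = (5 * p.1, p.2 - 1)%R.
Proof.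
apply: (@perm_inj _ py); rewrite permKV permE /fy /=; case: p => i j /=.
by rewrite subrK mulrA [(13 * _)%R]mulrC Z16_5_13 mul1r.
Qed.

Lemma pxV p : (px^-1) p = (p.1 - 1, p.2)%R.
Proof. by apply: (@perm_inj _ px); rewrite permKV permE /fx /= subrK; case: p. Qed.

Lemma px_rel m : 16 %| m -> px ^+ m = 1.
Proof.
case/dvdnP=> q ->; apply/permP=> p; rewrite pxX perm1 natrM Z16_16 mulr0 addr0.
by case: p.
Qed.

Lemma py_rel : 4 %| n -> 1 < n -> py ^+ n = 1.
Proof.
move=> /dvdnP[q eq] n1.
have e13 : (13 ^+ n = 1 :> 'Z_16)%R.
  have h4 : (13 ^+ 4 = 1 :> 'Z_16)%R by apply/val_inj.
  by rewrite eq mulnC exprM h4 expr1n.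
apply/permP=> p; rewrite pyX perm1 pchar_Zp // e13.
by rewrite mul1r addr0; case: p.
Qed.

Lemma comm_rel : [~ py, px] = px ^+ 4.
Proof.
apply/permP=> [[i j]]; rewrite /commg /conjg !permM.
rewrite pyV pxV !permE /fx /fy /=.
congr (_, _); last by rewrite subrK.
apply/eqP; rewrite -subr_eq0; apply/eqP.
transitivity (16%:R * (4 * i - 1) : 'Z_16)%R; first by ring.
by rewrite Z16_16 mul0r.
Qed.

End Model.

Section Card.
Variable n : nat.
Hypothesis n4 : 4 %| n.
Hypothesis n1 : 1 < n.

Definition fpair (q : 'I_16 * 'I_n) : {perm ('Z_16 * 'Z_n)} :=
  px n ^+ q.1 * py n ^+ q.2.

Lemma fpair_inj : injective fpair.
Proof.
move=> [i j] [i' j'] e.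
have := congr1 (fun s : {perm ('Z_16 * 'Z_n)} => s (0, 0)%R) e.
rewrite /fpair /= !permM !pxX !pyX /= !add0r => e2.
have ej : j = j' :> nat.
  have := congr1 (fun p => val p.2) e2; rewrite /= !val_Zp_nat //.
  by rewrite !modn_small.
have ei : i = i' :> nat.
  have /= e1 := congr1 fst e2.
  have e5 : (5 ^+ j * 13 ^+ j = 1 :> 'Z_16)%R by rewrite -exprMn Z16_5_13 expr1n.
  have : (i%:R = i'%:R :> 'Z_16)%R.
    move: e1; rewrite -ej => /(congr1 (fun z => 5 ^+ j * z)%R).
    by rewrite !mulrA e5 !mul1r.
  by move/(congr1 val); rewrite /= !val_Zp_nat // !modn_small.
by congr (_, _); apply: val_inj.
Qed.

Lemma model_card m (gT : finGroupType) (G : {group gT}) :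
  16 %| m -> G \isog Grp (x : y : x ^+ m, y ^+ n, [~ y, x] = x ^+ 4) ->
  (16 * n <= #|G|)%N.
Proof.
move=> m16 isoG.
pose H := (<[px n]> <*> <[py n]>)%G.
have homH : H \homg Grp (x : y : x ^+ m, y ^+ n, [~ y, x] = x ^+ 4).
  apply/existsP; exists (px n, py n); rewrite /= !xpair_eqE /=.
  by rewrite eqxx px_rel // py_rel // comm_rel !eqxx.
have := isoG _ H; rewrite homH => /card_homg/dvdn_leq le; apply: leq_trans (le (cardG_gt0 _)).
have <- : #|fpair @: [set: 'I_16 * 'I_n]| = (16 * n)%N.
  by rewrite card_imset; [rewrite cardsT card_prod !card_ord | exact: fpair_inj].
apply: subset_leq_card; apply/subsetP=> s /imsetP[[i j] _ ->].
by rewrite /fpair groupM // groupX // mem_gen // inE cycle_id ?orbT.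
Qed.

End Card.

Lemma norm_cycle_helper (gT : finGroupType) (x y : gT) :
  x ^ y \in <[x]> -> y \in 'N(<[x]>).
Proof.
move=> h; apply/normP/eqP; rewrite eqEcard -cycleJ cycle_subG h /=.
by rewrite cycleJ cardJg.
Qed.

Theorem lemma3 (gT : finGroupType) (G : {group gT}) (a b : gT) (m n : nat) :
  (exists k, m = 2 ^ k)%N -> (exists k, n = 2 ^ k)%N ->
  (16 <= m)%N -> (4 <= n)%N -> (m <= 4 * n)%N ->
  G \isog Grp (x : y : x ^+ m, y ^+ n, [~ y, x] = x ^+ 4) ->
  <[a]> <*> <[b]> = G -> a ^+ m = 1 -> b ^+ n = 1 -> [~ b, a] = a ^+ 4 ->
  let N := <[a ^+ 4]> in
  [/\ N \char G, abelian (G / N) &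
      ~ exists2 alpha : {perm gT}, alpha \in Aut G &
          {in G, forall g, coset N (alpha g) = (coset N g)^-1}].
Proof.
move=> [k1 Em] [k2 En] m16 n4 mn isoG defG am bn ba N.
have d16 : (16 %| m)%N.
  rewrite Em (_ : 16 = 2 ^ 4)%N // dvdn_Pexp2l // -(leq_exp2l _ _ (isT : 1 < 2)%N).
  by rewrite -Em.
have d4 : (4 %| n)%N.
  rewrite En (_ : 4 = 2 ^ 2)%N // dvdn_Pexp2l // -(leq_exp2l _ _ (isT : 1 < 2)%N).
  by rewrite -En.
have n1 : (1 < n)%N by apply: leq_trans n4.
have hcard := model_card d4 n1 d16 isoG.
have aG : a \in G by rewrite -defG mem_gen // inE cycle_id.
have bG : b \in G by rewrite -defG mem_gen // inE cycle_id orbT.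
have e1 : (a^-1) ^ b = a ^+ 3.
  by apply: (@mulIg _ a); rewrite -commgEr ba -expgSr.
have hab : a ^ b = a ^- 3 by rewrite -{1}[a]invgK conjVg e1.
have Nab : b \in 'N(<[a]>).
  by apply: norm_cycle_helper; rewrite hab groupV groupX // cycle_id.
have NNb : b \in 'N(N).
  apply: norm_cycle_helper; rewrite conjXg hab -expVgn expgnAC expVgn.
  by rewrite groupX // groupV cycle_id.
have NNa : a \in 'N(N).
  apply: norm_cycle_helper.
  have /conjg_fixP -> : [~ a ^+ 4, a] == 1.
    by apply/commgP/commute_sym/commuteX.
  exact: cycle_id.
have nNG : G \subset 'N(N) by rewrite -defG join_subG !cycle_subG NNa NNb.
have NsubA : N \subset <[a]> by rewrite cycle_subG groupX // cycle_id.
have abGN : abelian (G / N).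
  rewrite -defG quotientY ?cycle_subG // !quotient_cycle // abelianY.
  rewrite !cycle_abelian /= cycle_subG.
  rewrite -sub1set centsC cycle_subG.
  apply/centP=> y /set1P ->.
  apply/commgP; rewrite -morphR //.
  rewrite /= -invgR ba coset_id //.
  by rewrite groupV cycle_id.
have derN : G^`(1) = N.
  by apply/eqP; rewrite eqEsubset (der1_min nNG abGN) /= /N cycle_subG -ba; apply: mem_commg.
split=> //; first by rewrite -derN der_char.
case=> alpha AutA halpha.
have aM x y : x \in G -> y \in G -> alpha (x * y) = alpha x * alpha y.
  by move=> xG yG; rewrite -!(autmE AutA) morphM.
have aX x k : x \in G -> alpha (x ^+ k) = alpha x ^+ k.
  by move=> xG; rewrite -!(autmE AutA) morphX.
have aR x y : x \in G -> y \in G -> alpha [~ x, y] = [~ alpha x, alpha y].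
  by move=> xG yG; rewrite -!(autmE AutA) morphR.
have a1 : alpha 1 = 1 by rewrite -(autmE AutA) morph1.
set c := alpha a; set d := alpha b.
have cG : c \in G by apply: Aut_closed.
have dG : d \in G by apply: Aut_closed.
have inNG x : x \in G -> x \in 'N(N) by move/(subsetP nNG).
have caN : c * a \in N.
  apply: coset_idr; first by rewrite groupM ?inNG.
  by rewrite morphM ?inNG //= /c halpha // mulVg.
have dbN : d * b \in N.
  apply: coset_idr; first by rewrite groupM ?inNG.
  by rewrite morphM ?inNG //= /d halpha // mulVg.
have cA : c \in <[a]>.
  by rewrite -(mulgK a c) groupM ?groupV ?cycle_id // (subsetP NsubA).
have wA : d * b \in <[a]> by rewrite (subsetP NsubA).
have comA x y : x \in <[a]> -> y \in <[a]> -> commute x y.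
  move=> /cycleP[i ->] /cycleP[j ->]; apply: commuteX2; exact: commute_refl.
have rel : [~ d, c] = c ^+ 4 by rewrite -aR // ba aX.
have hcd : c ^ (b^-1) = c ^- 3.
  have : (c^-1) ^ d = c ^+ 3.
    by apply: (@mulIg _ c); rewrite -commgEr rel -expgSr.
  rewrite -[d](mulgK b) conjgM.
  have /conjg_fixP -> : [~ c^-1, d * b] == 1.
    by apply/commgP; apply: comA; rewrite ?groupV.
  by move=> h; rewrite -[c in c ^ _]invgK conjVg h.
have e2 : (c ^- 3) ^ (b^-1) = c.
  case/cycleP: cA => k ck.
  rewrite ck expgnAC -expVgn conjXg -hab conjgK.
  by [].
have c9 : c ^+ 9 = c.
  rewrite -{2}e2 conjVg conjXg hcd -expVgn invgK -expgM.
  by [].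
have c8 : c ^+ 8 = 1.
  by apply: (@mulIg _ c); rewrite mul1g -expgSr.
have a8 : a ^+ 8 = 1.
  by apply: (@perm_inj _ alpha); rewrite aX // a1.
have oa : (#[a] <= 8)%N by apply: dvdn_leq => //; rewrite order_dvdn a8.
have ob : (#[b] <= n)%N.
  by apply: dvdn_leq; [apply: leq_trans n1 | rewrite order_dvdn bn].
have cG' : (#|G| <= #[a] * #[b])%N.
  rewrite -defG norm_joinEr ?cycle_subG // /order mul_cardG.
  by apply: leq_pmulr; apply: cardG_gt0.
have h8 : (#[a] * #[b] <= 8 * n)%N by apply: leq_mul.
have := leq_trans hcard (leq_trans cG' h8).
by rewrite leq_pmul2r // (leq_trans _ n1).
Qed.
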